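(* Let $\mathbf n=(n_1,\dots,n_k)$ with $n_i\ge0$ integers and $\sum n_i=n$, and set $N_j=n_1+\dots+n_j$ ($N_0=0$). For every $m\in\mathbb N$, substituting $\lambda_{N_{j-1}+i}=\mu_jq^{-2(i-1)}$ for $j=1,\dots,k$, $i=1,\dots,n_j$ into $\vartheta_m(q^{-2},\lambda)$ gives $\vartheta_m(\mathbf n,q^{-2},\mu)$.
   Context: $\hat m=\frac{1-q^{-2m}}{1-q^{-2}}$. For indeterminates $\lambda=(\lambda_1,\dots,\lambda_n)$ and $m\ge1$, $\vartheta_m(q^{-2},\lambda)=\sum_{\ell=1}^n(1-q^{-2})^{\ell-1}\sum_{\mathbf d}\sum_{1\le j_1<\dots<j_\ell\le n}\lambda_{j_1}^{d_1}\cdots\lambda_{j_\ell}^{d_\ell}$ and, for $\mu=(\mu_1,\dots,\mu_k)$, $\vartheta_m(\mathbf n,q^{-2},\mu)=\sum_{\ell=1}^k(1-q^{-2})^{\ell-1}\sum_{\mathbf d}\sum_{1\le i_1<\dots<i_\ell\le k}\hat n_{i_1}\cdots\hat n_{i_\ell}\mu_{i_1}^{d_1}\cdots\mu_{i_\ell}^{d_\ell}$, where in both $\mathbf d=(d_1,\dots,d_\ell)$ runs over $\ell$-tuples of positive integers with sum $m$. *)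

(* Defs.v *)
From HB Require Import structures.
From mathcomp Require Import all_boot all_order all_algebra.
Set Implicit Arguments. Unset Strict Implicit. Unset Printing Implicit Defensive.
Import Order.TTheory GRing.Theory Num.Theory.
Local Open Scope ring_scope.

Definition qhat (R : unitRingType) (q : R) (m : nat) : R :=
  (1 - q ^- (2 * m)) / (1 - q ^- 2).

(* d = (d_1,...,d_l) : l-tuples of positive integers with sum m
   (each d_i <= m, so d_i is stored in 'I_m.+1) *)
Definition compositions (l m : nat) : pred {ffun 'I_l -> 'I_m.+1} :=
  fun d => [forall i, 0 < (d i : nat)]%N && (\sum_(i < l) (d i : nat) == m)%N.

Definition strinc (l n : nat) : pred {ffun 'I_l -> 'I_n} :=
  fun j => [forall a : 'I_l, forall b : 'I_l, (a < b)%N ==> (j a < j b)%N].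

Definition vartheta (R : comRingType) (m : nat) (t : R) (n : nat)
    (lam : 'I_n -> R) : R :=
  \sum_(1 <= l < n.+1) (1 - t) ^+ l.-1 *
    \sum_(d : {ffun 'I_l -> 'I_m.+1} | compositions d)
      \sum_(j : {ffun 'I_l -> 'I_n} | strinc j)
        \prod_(i < l) lam (j i) ^+ d i.

Definition vartheta_n (R : comUnitRingType) (m : nat) (q : R) (k : nat)
    (nn : 'I_k -> nat) (mu : 'I_k -> R) : R :=
  \sum_(1 <= l < k.+1) (1 - q ^- 2) ^+ l.-1 *
    \sum_(d : {ffun 'I_l -> 'I_m.+1} | compositions d)
      \sum_(j : {ffun 'I_l -> 'I_k} | strinc j)
        \prod_(i < l) (qhat q (nn (j i)) * mu (j i) ^+ d i).

(* N_j = n_1 + ... + n_j (for 0-based j : 'I_k, this is N_{j} with j counted from 0) *)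
Definition partN (k : nat) (nn : 'I_k -> nat) (j : nat) : nat :=
  (\sum_(j' < k | (j' < j)%N) nn j')%N.

(* Main.v *)
Set Warnings "-notation-overridden,-ambiguous-paths".
Require Import Defs.
From HB Require Import structures.
From mathcomp Require Import all_boot all_order all_algebra.
From mathcomp Require Import ring.
Import Order.TTheory GRing.Theory Num.Theory.
Set Implicit Arguments. Unset Strict Implicit. Unset Printing Implicit Defensive.
Local Open Scope ring_scope.

Definition Yp (R : comRingType) (m : nat) (w : nat -> R) : {poly R} :=
  \sum_(d : 'I_m.+1 | (0 < d)%N) w d *: 'X^d.

Lemma coef_comp (R : comRingType) m l (F : 'I_l -> nat -> R) :
  \sum_(d : {ffun 'I_l -> 'I_m.+1} | compositions d) \prod_(i < l) F i (d i)
  = (\prod_(i < l) Yp m (F i))`_m.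
Proof.
rewrite /Yp (eq_bigr (fun i => \sum_(d : 'I_m.+1)
   (if (0 < d)%N then F i d *: 'X^d else 0))); last by move=> i _; rewrite big_mkcond.
rewrite bigA_distr_bigA /=.
have E : forall f : {ffun 'I_l -> 'I_m.+1},
  \prod_i (if (0 < f i)%N then F i (f i) *: 'X^(f i) else 0) =
  (if [forall i, (0 < f i)%N] then \prod_i F i (f i) else 0) *: 'X^(\sum_i (f i : nat)).
  move=> f; case: (boolP [forall i, (0 < f i)%N]) => H.
    rewrite (eq_bigr (fun i => (F i (f i))%:P * 'X^(f i))); last first.
      by move=> i _; rewrite (forallP H i) mul_polyC.
    by rewrite big_split /= -rmorph_prod prodrXr mul_polyC.
  move: H; rewrite negb_forall => /existsP [i Hi].
  by rewrite (bigD1 i) //= (negbTE Hi) mul0r scale0r.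
rewrite (eq_bigr _ (fun f _ => E f)) coef_sumMXn.
rewrite [LHS]big_mkcond [RHS]big_mkcond; apply: eq_bigr => f _ /=.
rewrite /compositions; case: [forall i, _] => //=.
by case: (_ == m).
Qed.

Lemma strinc_inj l n (j : {ffun 'I_l -> 'I_n}) : strinc j -> injective j.
Proof.
move=> /forallP H a b e; apply: val_inj => /=.
case: (ltngtP a b) => // hab.
  by have := forallP (H a) b; rewrite hab /= e ltnn.
by have := forallP (H b) a; rewrite hab /= e ltnn.
Qed.

Definition ltO n := fun x y : 'I_n => (x < y)%N.

Lemma strinc_sorted l n (j : {ffun 'I_l -> 'I_n}) : strinc j -> sorted (@ltO n) (codom j).
Proof.
move=> /forallP H; rewrite codomE sorted_map.
have : sorted (relpre val ltn) (enum 'I_l) by rewrite -sorted_map val_enum_ord iota_ltn_sorted.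
apply: sub_sorted => a b /= hab; rewrite /ltO.
by have := forallP (H a) b; rewrite hab.
Qed.

Lemma codom_img l n (j : {ffun 'I_l -> 'I_n}) : codom j =i [set j i | i : 'I_l].
Proof.
move=> x; apply/codomP/imsetP => [[y ->]|[y _ ->]]; by exists y.
Qed.

Lemma img_inj l n (j1 j2 : {ffun 'I_l -> 'I_n}) : strinc j1 -> strinc j2 ->
  [set j1 i | i : 'I_l] = [set j2 i | i : 'I_l] -> j1 = j2.
Proof.
move=> h1 h2 e.
have ec : codom j1 = codom j2.
  apply: (@irr_sorted_eq _ (@ltO n)).
  - by move=> x y z; apply: ltn_trans.
  - by move=> x; apply: ltnn.
  - exact: strinc_sorted.
  - exact: strinc_sorted.
  by move=> x; rewrite !codom_img e.
apply/ffunP => i.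
have := nth_codom (j1 i) j1 (enum_rank i); rewrite ec nth_codom enum_rankK.
by move=> ->.
Qed.

Lemma img_surj l n (S : {set 'I_n}) : #|S| = l ->
  exists2 j : {ffun 'I_l -> 'I_n}, strinc j & [set j i | i : 'I_l] = S.
Proof.
move=> hS.
pose j := [ffun i : 'I_l => @enum_val _ (mem S) (cast_ord (esym hS) i)].
exists j.
  apply/forallP => a; apply/forallP => b; apply/implyP => hab.
  rewrite !ffunE /enum_val.
  have so : sorted (@ltO n) (enum S).
    rewrite /enum_mem; apply: sorted_filter; first by move=> x y z; apply: ltn_trans.
    rewrite -enumT.
    have : sorted (relpre val ltn) (enum 'I_n) by rewrite -sorted_map val_enum_ord iota_ltn_sorted.
    by apply: sub_sorted.
  have tr : transitive (@ltO n) by move=> x y z; apply: ltn_trans.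
  have := sorted_ltn_nth tr (enum_default (cast_ord (esym hS) a)) so.
  move=> /(_ (cast_ord (esym hS) a) (cast_ord (esym hS) b)).
  rewrite !inE -!cardE !ltn_ord /= => /(_ isT isT hab).
  have df : forall x y : 'I_n, nth x (enum S) b = nth y (enum S) b.
    by move=> x y; apply: set_nth_default; rewrite -cardE hS ltn_ord.
  by rewrite (df (enum_default (cast_ord (esym hS) b)) (enum_default (cast_ord (esym hS) a))).
apply/setP => x; apply/imsetP/idP => [[i _ ->]|xS].
  by rewrite ffunE enum_valP.
exists (cast_ord hS (enum_rank_in xS x)) => //.
by rewrite ffunE cast_ordK enum_rankK_in.
Qed.

Lemma sum_strinc (V : nmodType) l n (G : {set 'I_n} -> V) :
  \sum_(j : {ffun 'I_l -> 'I_n} | strinc j) G [set j i | i : 'I_l]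
  = \sum_(S : {set 'I_n} | #|S| == l) G S.
Proof.
pose img := fun j : {ffun 'I_l -> 'I_n} => [set j i | i : 'I_l].
have inj : {in [set j | strinc j] &, injective img}.
  by move=> j1 j2; rewrite !inE => h1 h2; apply: img_inj.
have E : [set S : {set 'I_n} | #|S| == l] = [set img j | j in [set j | strinc j]].
  apply/setP => S; rewrite inE; apply/eqP/imsetP => [hS|[j]].
    by have [j hj <-] := img_surj hS; exists j; rewrite ?inE.
  rewrite inE => hj ->; rewrite /img card_imset //; last exact: strinc_inj.
  by rewrite card_ord.
rewrite (eq_bigl (fun S => S \in [set S : {set 'I_n} | #|S| == l])); last by move=> S; rewrite inE.
rewrite E big_imset //; apply: eq_bigl => j; by rewrite inE.
Qed.

Lemma sum_card (V : nmodType) n (F : {set 'I_n} -> V) :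
  \sum_S F S = F set0 + \sum_(1 <= l < n.+1) \sum_(S : {set 'I_n} | #|S| == l) F S.
Proof.
have -> : F set0 = \sum_(S : {set 'I_n} | #|S| == 0%N) F S.
  by rewrite (big_pred1 set0) // => S; rewrite cards_eq0.
rewrite -(@big_ltn _ _ _ 0 n.+1 (fun l => \sum_(S : {set 'I_n} | #|S| == l) F S)) //.
rewrite (eq_big_nat _ _ (F2 := fun l => \sum_(S : {set 'I_n}) (if #|S| == l then F S else 0)));
  last by move=> l _; rewrite big_mkcond.
rewrite exchange_big /=; apply: eq_bigr => S _.
have hS : (#|S| <= n)%N by rewrite -[X in (_ <= X)%N]card_ord max_card.
rewrite (@big_cat_nat _ _ _ #|S|) //=; last by rewrite ltnW // ltnS.
rewrite big1_seq; last first.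
  by move=> l; rewrite mem_index_iota => /andP[_ hl]; rewrite eq_sym (ltn_eqF hl).
rewrite add0r big_ltn ?ltnS // eqxx big1_seq ?addr0 //.
by move=> l; rewrite mem_index_iota => /andP[_ /andP[hl _]]; rewrite (ltn_eqF hl).
Qed.

Lemma GL (R : comRingType) (c : R) m n (w : 'I_n -> nat -> R) :
  c * (\sum_(1 <= l < n.+1) c ^+ l.-1 *
    \sum_(d : {ffun 'I_l -> 'I_m.+1} | compositions d)
      \sum_(j : {ffun 'I_l -> 'I_n} | strinc j)
        \prod_(i < l) w (j i) (d i))
  = (\prod_(s < n) (1 + Yp m (fun d => c * w s d)))`_m - (m == 0%N)%:R.
Proof.
rewrite (eq_bigr (fun s => Yp m (fun d => c * w s d) + 1)); last by move=> s _; rewrite addrC.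
rewrite bigA_distr /= coef_sum.
rewrite [in RHS](eq_bigr (fun J : {set 'I_n} => (\prod_(i in J) Yp m (fun d => c * w i d))`_m));
  last by move=> J _; rewrite -big_mkcond.
rewrite sum_card big_set0 coef1 addrC addrK mulr_sumr.
apply: eq_big_nat => l /andP[hl _].
rewrite -(sum_strinc _ (fun S => (\prod_(i in S) Yp m (fun d => c * w i d))`_m)).
rewrite mulrA -exprS prednK // mulr_sumr.
under eq_bigr do rewrite mulr_sumr.
rewrite exchange_big /=.
apply: eq_bigr => j hj.
rewrite big_imset /=; last by move=> a b _ _; apply: strinc_inj.
rewrite -coef_comp; apply: eq_bigr => d _.
by rewrite big_split /= prodr_const card_ord.
Qed.

Section Eqm.
Variable (R : comRingType) (m : nat).

Definition eqm (p q : {poly R}) := forall i, (i <= m)%N -> p`_i = q`_i.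

Lemma eqm_refl p : eqm p p. Proof. by []. Qed.
Lemma eqm_sym p q : eqm p q -> eqm q p. Proof. by move=> h i hi; rewrite h. Qed.
Lemma eqm_trans p q r : eqm p q -> eqm q r -> eqm p r.
Proof. by move=> h1 h2 i hi; rewrite h1 // h2. Qed.

Lemma eqm_mull r p q : eqm p q -> eqm (r * p) (r * q).
Proof.
move=> h i hi; rewrite !coefM; apply: eq_bigr => j _; rewrite h //.
exact: leq_trans (leq_subr _ _) hi.
Qed.

Lemma eqm_mul p p' q q' : eqm p p' -> eqm q q' -> eqm (p * q) (p' * q').
Proof.
move=> h1 h2; apply: (@eqm_trans _ (p * q')); first exact: eqm_mull.
by rewrite mulrC [p' * _]mulrC; apply: eqm_mull.
Qed.

Lemma eqm_prod I (r : seq I) (P : pred I) (F G : I -> {poly R}) :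
  (forall i, P i -> eqm (F i) (G i)) ->
  eqm (\prod_(i <- r | P i) F i) (\prod_(i <- r | P i) G i).
Proof.
move=> h; apply: (big_ind2 eqm); [exact: eqm_refl | | exact: h].
by move=> ? ? ? ? ; apply: eqm_mul.
Qed.

Lemma eqm_cancel a p q : eqm ((1 - a *: 'X) * p) ((1 - a *: 'X) * q) -> eqm p q.
Proof.
move=> h i; elim: i => [|i IH] hi.
  have := h 0%N hi; rewrite !mulrBl !mul1r -!scalerAl !coefB !coefZ !coefXM /=.
  by rewrite !mulr0 !subr0.
have := h i.+1 hi; rewrite !mulrBl !mul1r -!scalerAl !coefB !coefZ !coefXM /=.
by rewrite IH ?(ltnW hi) // => /addIr.
Qed.

Lemma coefYp (w : nat -> R) i :
  (Yp m w)`_i = if (0 < i <= m)%N then w i else 0.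
Proof.
rewrite /Yp coef_sumMXn.
case: (boolP (0 < i <= m)%N) => [/andP[h0 hm] | h].
  rewrite (big_pred1 (Ordinal (hm : (i < m.+1)%N))) //= => d /=.
  by rewrite /= -val_eqE /=; case: eqP => [->|]; rewrite ?andbF ?h0.
apply: big1 => d /andP[hd /eqP e]; move: h; rewrite -e hd /=.
by rewrite -ltnS ltn_ord.
Qed.

Definition Tp (a b : R) := 1 + Yp m (fun d => (a - b) * a ^+ d.-1).

Lemma T1 a b : eqm ((1 - a *: 'X) * Tp a b) (1 - b *: 'X).
Proof.
move=> i hi; rewrite mulrBl mul1r -scalerAl coefB coefZ coefXM /Tp !coefD coefYp.
rewrite coefN coefZ coefX !coef1.
case: i hi => [|i] hi /=; first by rewrite /= !mulr0 !subr0 ?oppr0 ?addr0.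
rewrite hi coefYp /=.
case: i hi => [|i] hi /=; first by rewrite /= expr0 ?mulr1 ?addr0; ring.
rewrite (ltnW hi) /= exprS. ring.
Qed.

Lemma tele (a : nat -> R) r :
  eqm (\prod_(i < r) Tp (a i) (a i.+1)) (Tp (a 0%N) (a r)).
Proof.
apply: (@eqm_cancel (a 0%N)).
elim: r => [|r IH].
  by rewrite big_ord0 mulr1; apply: eqm_sym; apply: T1.
rewrite big_ord_recr /= mulrA.
apply: eqm_trans (eqm_mul IH (eqm_refl _)) _.
apply: eqm_trans (eqm_mul (T1 _ _) (eqm_refl _)) _.
apply: eqm_trans (T1 _ _) _.
by apply: eqm_sym; apply: T1.
Qed.

End Eqm.

Lemma regroup (R : comRingType) (F : nat -> R) k (f : nat -> nat) :
  \prod_(0 <= s < \sum_(0 <= j < k) f j) F s =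
  \prod_(0 <= j < k) \prod_(0 <= i < f j) F ((\sum_(0 <= j' < j) f j') + i)%N.
Proof.
elim: k => [|k IH]; first by rewrite !big_geq.
rewrite !big_nat_recr //= -IH (@big_cat_nat _ _ _ (\sum_(0 <= j < k) f j)) ?leq_addr //=.
congr (_ * _).
rewrite -{1}[\sum_(0 <= j < k) f j]add0n big_addn addKn.
by apply: eq_bigr => i _; rewrite addnC.
Qed.

Lemma partN_nat k (nn : 'I_k -> nat) (f : nat -> nat) (j : 'I_k) :
  (forall j' : 'I_k, f j' = nn j') ->
  partN nn j = (\sum_(0 <= j' < j) f j')%N.
Proof.
move=> hf; rewrite /partN.
rewrite (eq_bigr (fun j' : 'I_k => f j')) ; last by move=> j' _; rewrite hf.
rewrite -(big_mkord (fun j' => (j' < j)%N) f) big_mkcond.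
rewrite (@big_cat_nat _ _ _ j) //= ?(ltnW (ltn_ord j)) //.
rewrite [X in (_ + X)%N]big1_seq ?addn0; last first.
  by move=> i /andP[_]; rewrite mem_index_iota => /andP[h _]; rewrite ltnNge h.
apply: eq_big_nat => i /andP[_ h]; by rewrite h.
Qed.

Lemma partN_bound k (nn : 'I_k -> nat) (j : 'I_k) :
  (partN nn j + nn j <= \sum_(j' < k) nn j')%N.
Proof.
rewrite /partN [X in (_ <= X)%N](bigID (fun j' : 'I_k => (j' < j)%N)) /=.
apply: leq_add; first exact: leqnn.
by rewrite (bigD1 j) /= ?ltnn // leq_addr.
Qed.

Lemma qpow (R : comUnitRingType) (q : R) i : q ^- (2 * i) = (q ^- 2) ^+ i.
Proof. by rewrite -exprVn exprM exprVn. Qed.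

Unset Implicit Arguments. Set Strict Implicit.

Theorem proposition4p5 (R : comUnitRingType) (q : R)
    (hq : q \is a GRing.unit) (ht : (1 - q ^- 2) \is a GRing.unit)
    (k : nat) (nn : 'I_k -> nat) (n : nat) (hn : n = (\sum_(j < k) nn j)%N)
    (mu : 'I_k -> R) (lam : 'I_n -> R)
    (hlam : forall (j : 'I_k) (i : nat) (p : 'I_n),
        (i < nn j)%N -> (p : nat) = (partN nn j + i)%N ->
        lam p = mu j * q ^- (2 * i))
    (m : nat) :
  vartheta m (q ^- 2) lam = vartheta_n m q nn mu.
Proof.
set c := 1 - q ^- 2.
apply: (mulrI ht).
have E1 : c * vartheta m (q ^- 2) lam =
  (\prod_(s < n) (1 + Yp m (fun d => c * lam s ^+ d)))`_m - (m == 0%N)%:R.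
  exact: (GL c m (fun s d => lam s ^+ d)).
have E2 : c * vartheta_n m q nn mu =
  (\prod_(j < k) (1 + Yp m (fun d => c * (qhat q (nn j) * mu j ^+ d))))`_m - (m == 0%N)%:R.
  exact: (GL c m (fun j d => qhat q (nn j) * mu j ^+ d)).
rewrite E1 E2; congr (_ - _).
suff H : eqm m (\prod_(s < n) (1 + Yp m (fun d => c * lam s ^+ d)))
   (\prod_(j < k) (1 + Yp m (fun d => c * (qhat q (nn j) * mu j ^+ d)))).
  exact: H.
pose f := fun j => match (insub j : option 'I_k) with Some j' => nn j' | None => 0%N end.
have hf : forall j' : 'I_k, f j' = nn j' by move=> j'; rewrite /f valK.
pose F := fun s => match (insub s : option 'I_n) with
  Some s' => 1 + Yp m (fun d => c * lam s' ^+ d) | None => 1 end.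
rewrite (eq_bigr (fun s : 'I_n => F s)); last by move=> s _; rewrite /F valK.
have hn' : n = (\sum_(0 <= j < k) f j)%N.
  by rewrite hn big_mkord; apply: eq_bigr => j _; rewrite hf.
rewrite -(big_mkord xpredT F).
have -> : \prod_(0 <= s < n) F s = \prod_(0 <= s < \sum_(0 <= j < k) f j) F s by rewrite -hn'.
rewrite regroup big_mkord; apply: eqm_prod => j _.
rewrite hf -(partN_nat _ hf).
pose a := fun i => mu j * (q ^- 2) ^+ i.
rewrite big_mkord (eq_bigr (fun i : 'I_(nn j) => Tp m (a i) (a i.+1))); last first.
  move=> i _; rewrite /F; case: insubP => [p _ hp | hN].
    rewrite (hlam j i p (ltn_ord i) hp) qpow /Tp; congr (1 + _).
    apply: eq_bigr => d hd; congr (_ *: _).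
    rewrite /a /c -(prednK hd) /= !exprS exprMn; ring.
  exfalso; move: hN; rewrite hn -ltnS; apply/negP/negPn.
  rewrite ltnS; apply: (leq_trans _ (partN_bound nn j)).
  by rewrite ltn_add2l ltn_ord.
apply: eqm_trans (tele (m:=m) a (nn j)) _.
have hc : c * qhat q (nn j) = 1 - (q ^- 2) ^+ nn j.
  by rewrite /qhat /c mulrC divrK // qpow.
rewrite /Tp; have -> : Yp m (fun d => (a 0%N - a (nn j)) * a 0%N ^+ d.-1) = Yp m (fun d => c * (qhat q (nn j) * mu j ^+ d)).
  apply: eq_bigr => d hd; congr (_ *: _).
  rewrite mulrA hc /a expr0 mulr1 -(prednK hd) /= [mu j ^+ _.+1]exprS.
  move: (q ^- 2) => t; ring.
exact: eqm_refl.
Qed.
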